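(* Let $\ell_v$ be a vertical line and $\ell_h$ a horizontal line, and let $\mathcal L$ be a finite family of L-frames, all of the same type, each of which intersects both $\ell_v$ and $\ell_h$. Then the intersection graph of $\mathcal L$ is a permutation graph; more precisely, taking the order in which the L-frames cross $\ell_v$ and the order in which they cross $\ell_h$ gives two orderings of $\mathcal L$ such that two L-frames intersect iff they appear in different relative order in the two orderings.
   Context: An L-frame is the union of a closed horizontal segment and a closed vertical segment sharing an endpoint (the corner); its type is determined by which directions (left/right, up/down) the two segments extend from the corner. A graph is a permutation graph if its vertices can be placed on two parallel lines so that, joining each vertex's two copies by a segment, two vertices are adjacent iff their segments cross (equivalently, iff they appear in different relative order on the two lines). Intersection graphs join two objects iff they intersect. *)

(* Defs.v *)
From HB Require Import structures.
From mathcomp Require Import all_boot all_order all_algebra all_fingroup.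
Set Implicit Arguments. Unset Strict Implicit. Unset Printing Implicit Defensive.
Import Order.TTheory GRing.Theory Num.Theory.
Local Open Scope ring_scope.

(* An L-frame: corner (lf_cx, lf_cy); a horizontal segment of length lf_h
   going right (lf_right = true) or left from the corner, and a vertical
   segment of length lf_v going up (lf_up = true) or down from the corner. *)
Record Lframe (R : realFieldType) := MkLframe {
  lf_cx : R; lf_cy : R; lf_h : R; lf_v : R; lf_right : bool; lf_up : bool }.

Definition Lframe_wf (R : realFieldType) (L : Lframe R) : Prop :=
  0 < lf_h L /\ 0 < lf_v L.

Definition Ltype (R : realFieldType) (L : Lframe R) : bool * bool :=
  (lf_right L, lf_up L).

Definition on_harm (R : realFieldType) (L : Lframe R) (p : R * R) : bool :=
  (p.2 == lf_cy L) &&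
  (if lf_right L then (lf_cx L <= p.1) && (p.1 <= lf_cx L + lf_h L)
   else (lf_cx L - lf_h L <= p.1) && (p.1 <= lf_cx L)).

Definition on_varm (R : realFieldType) (L : Lframe R) (p : R * R) : bool :=
  (p.1 == lf_cx L) &&
  (if lf_up L then (lf_cy L <= p.2) && (p.2 <= lf_cy L + lf_v L)
   else (lf_cy L - lf_v L <= p.2) && (p.2 <= lf_cy L)).

Definition on_Lframe (R : realFieldType) (L : Lframe R) (p : R * R) : bool :=
  on_harm L p || on_varm L p.

Definition Lframes_meet (R : realFieldType) (L1 L2 : Lframe R) : Prop :=
  exists p : R * R, on_Lframe L1 p && on_Lframe L2 p.

Definition meets_vline (R : realFieldType) (L : Lframe R) (x0 : R) : Prop :=
  exists y : R, on_Lframe L (x0, y).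
Definition meets_hline (R : realFieldType) (L : Lframe R) (y0 : R) : Prop :=
  exists x : R, on_Lframe L (x, y0).

(* [o] orders the frames consistently with the order in which they cross the
   vertical line x = x0, read in direction [up] (bottom-to-top if up = true,
   top-to-bottom otherwise): whenever the whole crossing of frame i lies
   strictly before the whole crossing of frame j along the line, i comes
   before j in o. *)
Definition follows_vline (R : realFieldType) (n : nat) (F : 'I_n -> Lframe R)
    (x0 : R) (up : bool) (o : {perm 'I_n}) : Prop :=
  forall i j : 'I_n,
    (forall y y' : R, on_Lframe (F i) (x0, y) -> on_Lframe (F j) (x0, y') ->
       if up then y < y' else y' < y) ->
    (o i < o j)%N.

Definition follows_hline (R : realFieldType) (n : nat) (F : 'I_n -> Lframe R)
    (y0 : R) (right : bool) (o : {perm 'I_n}) : Prop :=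
  forall i j : 'I_n,
    (forall x x' : R, on_Lframe (F i) (x, y0) -> on_Lframe (F j) (x', y0) ->
       if right then x < x' else x' < x) ->
    (o i < o j)%N.

(* Main.v *)
Require Import Defs.
From HB Require Import structures.
From mathcomp Require Import all_boot all_order all_algebra all_fingroup.
From mathcomp Require Import ring lra.
Import Order.TTheory GRing.Theory Num.Theory.
Local Open Scope ring_scope.
Section S. Variable R : realFieldType.
Definition lexR (k1 k2 : R * R * R) : bool :=
  (k1.1.1 < k2.1.1) || ((k1.1.1 == k2.1.1) && ((k1.1.2 < k2.1.2) || ((k1.1.2 == k2.1.2) && (k1.2 < k2.2)))).
Lemma lexR_trans : transitive lexR.
Proof.
move=> [[y1 y2] y3] [[x1 x2] x3] [[z1 z2] z3]; rewrite /lexR /=.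
move=> /orP[h1|/andP[/eqP e1 /orP[h2|/andP[/eqP e2 h3]]]];
move=> /orP[k1|/andP[/eqP f1 /orP[k2|/andP[/eqP f2 k3]]]]; subst => //=;
rewrite ?eqxx /=.
all: try by rewrite (lt_trans h1 k1).
all: try by rewrite h1.
all: try by rewrite k1.
all: try by rewrite (lt_trans h2 k2) orbT.
all: try by rewrite h2 orbT.
all: try by rewrite k2 orbT.
by rewrite (lt_trans h3 k3) !orbT.
Qed.
Lemma lexR_irr k : lexR k k = false.
Proof. by case: k => [[a b] c]; rewrite /lexR /= !ltxx !eqxx. Qed.
Lemma lexR_tot k1 k2 : k1.2 != k2.2 -> lexR k1 k2 || lexR k2 k1.
Proof.
case: k1 k2 => [[a b] c] [[d e] f] /= ne; rewrite /lexR /=.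
case: (ltgtP a d) => //= _; case: (ltgtP b e) => //= _; case: (ltgtP c f) => //=.
by move=> E; rewrite E eqxx in ne.
Qed.
Lemma comb (a a' b b' c c' : R) : c != c' ->
  ((a <= a' /\ b' <= b) \/ (a' <= a /\ b <= b')) <->
  (lexR (b, -a, c) (b', -a', c') != lexR (a, -b, -c) (a', -b', -c')).
Proof.
move=> ne; rewrite /lexR /= !eqr_opp !ltrN2.
case: (ltgtP a a'); case: (ltgtP b b'); case: (ltgtP c c') => //=;
  try (move=> E; rewrite E eqxx in ne; done).
all: intuition.
Qed.
End S.
Arguments lexR {R}.
Arguments lexR_trans {R}.
Arguments lexR_irr {R}.
Arguments lexR_tot {R}.
Arguments comb {R}.
Section Rk.
Variable n : nat.
Variable lt : rel 'I_n.
Definition rk (i : 'I_n) : nat := #|[pred k | lt k i]|.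
Lemma rk_mono (tr : transitive lt) (irr : irreflexive lt) i j : lt i j -> (rk i < rk j)%N.
Proof.
move=> h; apply: proper_card; apply/properP; split.
  by apply/subsetP => k; rewrite !inE => hk; apply: tr hk h.
by exists i; rewrite !inE ?irr.
Qed.
Lemma rk_ltn (irr : irreflexive lt) i : (rk i < n)%N.
Proof.
rewrite -[X in (_ < X)%N]card_ord; apply: proper_card; apply/properP; split.
  by apply/subsetP.
by exists i; rewrite !inE ?irr.
Qed.
Lemma rkE (tr : transitive lt) (irr : irreflexive lt)
   (tot : forall i j, i != j -> lt i j || lt j i) i j :
  (rk i < rk j)%N = lt i j.
Proof.
apply/idP/idP; last exact: rk_mono.
case: (eqVneq i j) => [->|ne]; first by rewrite ltnn.
case/orP: (tot _ _ ne) => // h hl.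
by have := rk_mono tr irr _ _ h; rewrite ltnNge (ltnW hl).
Qed.
Lemma rk_inj (tr : transitive lt) (irr : irreflexive lt)
   (tot : forall i j, i != j -> lt i j || lt j i) :
  injective (fun i => Ordinal (rk_ltn irr i)).
Proof.
move=> i j /(congr1 val) /= e; apply/eqP; apply: contraT => ne.
case/orP: (tot _ _ ne) => /(rk_mono tr irr _ _); rewrite e ltnn //.
Qed.
Definition rkp tr irr tot := perm (@rk_inj tr irr tot).
Lemma rkpE tr irr tot i j : (rkp tr irr tot i < rkp tr irr tot j)%N = lt i j.
Proof. by rewrite !permE /= rkE. Qed.
End Rk.
Arguments rkp {n lt}.
Arguments rkpE {n lt}.

Section Geo.
Variable R : realFieldType.
Definition sg (b : bool) (x : R) : R := if b then x else - x.

Lemma sg_lt b x y : (if b then x < y else y < x) -> sg b x < sg b y.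
Proof. by case: b; rewrite /sg ?ltrN2. Qed.

Lemma on_harmE (L : Lframe R) p : on_harm L p =
  [&& p.2 == lf_cy L, sg (lf_right L) (lf_cx L) <= sg (lf_right L) p.1 &
      sg (lf_right L) p.1 <= sg (lf_right L) (lf_cx L) + lf_h L].
Proof.
rewrite /on_harm /sg; case: (lf_right L) => //; congr (_ && _).
rewrite andbC lerN2; congr (_ && _); apply/idP/idP => ?; lra.
Qed.

Lemma on_varmE (L : Lframe R) p : on_varm L p =
  [&& p.1 == lf_cx L, sg (lf_up L) (lf_cy L) <= sg (lf_up L) p.2 &
      sg (lf_up L) p.2 <= sg (lf_up L) (lf_cy L) + lf_v L].
Proof.
rewrite /on_varm /sg; case: (lf_up L) => //; congr (_ && _).
rewrite andbC lerN2; congr (_ && _); apply/idP/idP => ?; lra.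
Qed.

Definition bounds (L : Lframe R) (x0 y0 : R) :=
  [/\ sg (lf_right L) (lf_cx L) <= sg (lf_right L) x0,
      sg (lf_right L) x0 <= sg (lf_right L) (lf_cx L) + lf_h L,
      sg (lf_up L) (lf_cy L) <= sg (lf_up L) y0 &
      sg (lf_up L) y0 <= sg (lf_up L) (lf_cy L) + lf_v L].

Lemma frame_bounds (L : Lframe R) x0 y0 : Lframe_wf L -> meets_vline L x0 ->
  meets_hline L y0 -> bounds L x0 y0.
Proof.
case=> h0 v0 [y Hy] [x Hx].
rewrite /on_Lframe on_harmE on_varmE /= in Hy.
rewrite /on_Lframe on_harmE on_varmE /= in Hx.
have [a1 a2] : sg (lf_right L) (lf_cx L) <= sg (lf_right L) x0 /\
   sg (lf_right L) x0 <= sg (lf_right L) (lf_cx L) + lf_h L.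
  case/orP: Hy => /and3P[/eqP e b1 b2]; first by [].
  by rewrite e lexx lerDl ltW.
have [a3 a4] : sg (lf_up L) (lf_cy L) <= sg (lf_up L) y0 /\
   sg (lf_up L) y0 <= sg (lf_up L) (lf_cy L) + lf_v L.
  case/orP: Hx => /and3P[/eqP e b1 b2]; last by [].
  by rewrite e lexx lerDl ltW.
by split.
Qed.

Lemma meetE (L1 L2 : Lframe R) x0 y0 :
  lf_right L2 = lf_right L1 -> lf_up L2 = lf_up L1 ->
  bounds L1 x0 y0 -> bounds L2 x0 y0 ->
  Lframes_meet L1 L2 <->
  ((sg (lf_right L1) (lf_cx L1) <= sg (lf_right L1) (lf_cx L2) /\
    sg (lf_up L1) (lf_cy L2) <= sg (lf_up L1) (lf_cy L1)) \/
   (sg (lf_right L1) (lf_cx L2) <= sg (lf_right L1) (lf_cx L1) /\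
    sg (lf_up L1) (lf_cy L1) <= sg (lf_up L1) (lf_cy L2))).
Proof.
move=> E1 E2 [c1 c2 c3 c4]; rewrite /bounds E1 E2 => -[d1 d2 d3 d4].
split.
  case=> p /andP[H1 H2].
  rewrite /on_Lframe !on_harmE !on_varmE E1 E2 in H1 H2.
  case/orP: H1 => /and3P[/eqP e1 a1 a2]; case/orP: H2 => /and3P[/eqP e2 b1 b2].
  - rewrite -e1 -e2; case/orP: (le_total (sg (lf_right L1) (lf_cx L1))
        (sg (lf_right L1) (lf_cx L2))) => h; [left|right]; by rewrite lexx.
  - by left; rewrite -e1 -e2.
  - by right; rewrite -e1 -e2.
  - rewrite -e1 -e2; case/orP: (le_total (sg (lf_up L1) (lf_cy L1))
        (sg (lf_up L1) (lf_cy L2))) => h; [right|left]; by rewrite lexx.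
case => [[h1 h2]|[h1 h2]].
  exists (lf_cx L2, lf_cy L1); apply/andP; split;
    rewrite /on_Lframe ?on_harmE ?on_varmE ?E1 ?E2 /= eqxx.
    by rewrite h1 (le_trans d1 c2).
  by rewrite h2 (le_trans c3 d4) orbT.
exists (lf_cx L1, lf_cy L2); apply/andP; split;
  rewrite /on_Lframe ?on_harmE ?on_varmE ?E1 ?E2 /= eqxx.
  by rewrite h2 (le_trans d3 c4) orbT.
by rewrite h1 (le_trans c1 d2).
Qed.
End Geo.
Arguments sg {R}.
Arguments bounds {R}.
Arguments frame_bounds {R}.
Arguments meetE {R}.
Arguments sg_lt {R}.

Theorem mainTheorem11 (R : realFieldType) (x0 y0 : R) (n : nat)
    (F : 'I_n -> Lframe R) (t : bool * bool) :
  (forall i, Lframe_wf (F i)) ->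
  (forall i, Ltype (F i) = t) ->
  (forall i, meets_vline (F i) x0) ->
  (forall i, meets_hline (F i) y0) ->
  exists (sv sh : {perm 'I_n}) (up right : bool),
    [/\ follows_vline F x0 up sv,
        follows_hline F y0 right sh &
        forall i j : 'I_n, i != j ->
          (Lframes_meet (F i) (F j) <->
           ((sv i < sv j)%N != (sh i < sh j)%N))].
Proof.
case: t => r u wf ty mv mh.
have Hr i : lf_right (F i) = r by have := congr1 fst (ty i).
have Hu i : lf_up (F i) = u by have := congr1 snd (ty i).
have bd i : bounds (F i) x0 y0 by apply: frame_bounds.
pose A i := sg r (lf_cx (F i)).
pose B i := sg u (lf_cy (F i)).
pose ltv := fun i j : 'I_n =>
  lexR (B i, - A i, (i : nat)%:R) (B j, - A j, (j : nat)%:R).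
pose lth := fun i j : 'I_n =>
  lexR (A i, - B i, - (i : nat)%:R) (A j, - B j, - (j : nat)%:R).
have trv : transitive ltv by move=> ? ? ?; apply: lexR_trans.
have trh : transitive lth by move=> ? ? ?; apply: lexR_trans.
have irv : irreflexive ltv by move=> ?; rewrite /ltv lexR_irr.
have irh : irreflexive lth by move=> ?; rewrite /lth lexR_irr.
have neR (i j : 'I_n) : i != j -> (i : nat)%:R != (j : nat)%:R :> R.
  by move=> ne; rewrite eqr_nat.
have tov i j : i != j -> ltv i j || ltv j i.
  by move=> ne; apply: lexR_tot; apply: neR.
have toh i j : i != j -> lth i j || lth j i.
  by move=> ne; apply: lexR_tot; rewrite /= eqr_opp; apply: neR.
have onv i : on_Lframe (F i) (x0, lf_cy (F i)).
  case: (bd i) => b1 b2 _ _.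
  by rewrite /on_Lframe on_harmE /= eqxx b1 b2.
have onh i : on_Lframe (F i) (lf_cx (F i), y0).
  case: (bd i) => _ _ b3 b4.
  by rewrite /on_Lframe on_varmE /= eqxx b3 b4 orbT.
exists (rkp trv irv tov), (rkp trh irh toh), u, r; split.
- move=> i j H; rewrite rkpE /ltv /lexR /=; apply/orP; left.
  by rewrite /B; apply: sg_lt; apply: H.
- move=> i j H; rewrite rkpE /lth /lexR /=; apply/orP; left.
  by rewrite /A; apply: sg_lt; apply: H.
move=> i j ne; rewrite !rkpE.
rewrite (meetE _ _ _ _ (etrans (Hr j) (esym (Hr i))) (etrans (Hu j) (esym (Hu i))) (bd i) (bd j)) !Hr !Hu.
exact: (comb _ _ _ _ _ _ (neR i j ne)).
Qed.
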